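(* Let $q\ge2$, $\beta>0$, $u>0$, and let $\Phi_0:\mathbb Z_q\to[0,\infty)$ be even with $\Phi_0(0)=0$ and $\Phi_0(i)\ge u$ for all $i\neq0$. Let $Q_0$ be the symmetric $q\times q$ matrix $Q_0(i,j)=e^{-\beta\Phi_0(i-j)}/\sum_{k\in\mathbb Z_q}e^{-\beta\Phi_0(k)}$. Then every eigenvalue $\lambda$ of $Q_0$ satisfies $$\lambda\ \ge\ \frac{1-(q-1)e^{-\beta u}}{1+(q-1)e^{-\beta u}}.$$
   Context: $\mathbb Z_q=\{0,\dots,q-1\}$ with addition mod $q$. $Q_0$ is the normalized transfer matrix of a clock model with pair potential $u_{i,j}=\Phi_0(i-j)$. *)

(* Defs.v *)
From HB Require Import structures.
From mathcomp Require Import all_boot all_order all_algebra.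
From mathcomp Require Import all_classical all_reals all_analysis.
Set Implicit Arguments. Unset Strict Implicit. Unset Printing Implicit Defensive.
Import Order.TTheory GRing.Theory Num.Theory.
Local Open Scope ring_scope.

(* Z_q is modelled by 'I_q (values 0..q-1) with arithmetic mod q. *)
Lemma Zq_pos (q : nat) (i : 'I_q) : (0 < q)%N.
Proof. by case: i => m /= /(leq_ltn_trans (leq0n m)). Qed.

Definition Zq_sub (q : nat) (i j : 'I_q) : 'I_q :=
  Ordinal (ltn_pmod (i + (q - j))%N (Zq_pos i)).

Definition Zq_opp (q : nat) (i : 'I_q) : 'I_q :=
  Ordinal (ltn_pmod (q - i)%N (Zq_pos i)).

Definition transferQ0 (R : realType) (q : nat) (beta : R) (Phi0 : 'I_q -> R)
  : 'M[R]_q :=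
  \matrix_(i < q, j < q)
     (expR (- beta * Phi0 (Zq_sub i j)) / \sum_(k < q) expR (- beta * Phi0 k)).

(* Main.v *)
Require Import Defs.
From HB Require Import structures.
From mathcomp Require Import all_boot all_order all_algebra.
From mathcomp Require Import all_classical all_reals all_analysis.
From mathcomp Require Import ring lra.
Import Order.TTheory GRing.Theory Num.Theory.
Local Open Scope ring_scope.

Lemma Zq_sub_inj (q : nat) (j : 'I_q) : injective (fun i => Zq_sub i j).
Proof.
move=> i i' /(congr1 val) /= /eqP; rewrite eqn_modDr !modn_small //.
by move=> /eqP /val_inj.
Qed.

Lemma Zq_sub_diag (q : nat) (j : 'I_q) : nat_of_ord (Zq_sub j j) = 0%N.
Proof. by rewrite /= subnKC ?modnn // ltnW. Qed.

Theorem lemma4p5 (R : realType) (q : nat) (beta u : R) (Phi0 : 'I_q -> R)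
  (hq : (2 <= q)%N) (hbeta : 0 < beta) (hu : 0 < u)
  (hnn : forall i, 0 <= Phi0 i)
  (heven : forall i, Phi0 (Zq_opp i) = Phi0 i)
  (hzero : forall i : 'I_q, nat_of_ord i = 0%N -> Phi0 i = 0)
  (hgap : forall i : 'I_q, nat_of_ord i <> 0%N -> u <= Phi0 i)
  (lambda : R) :
  eigenvalue (transferQ0 beta Phi0) lambda ->
  (1 - (q%:R - 1) * expR (- beta * u)) / (1 + (q%:R - 1) * expR (- beta * u))
    <= lambda.
Proof.
move=> /eigenvalueP [v hv vn0].
set e := fun k => expR (- beta * Phi0 k).
set Z := \sum_(k < q) e k.
set c := expR (- beta * u).
have epos k : 0 < e k by rewrite /e expR_gt0.
have cpos : 0 < c by rewrite /c expR_gt0.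
have j0 : 'I_q by exists 0%N; apply: leq_trans hq.
set k0 := Zq_sub j0 j0.
have ek0 : e k0 = 1 by rewrite /e hzero ?(@Zq_sub_diag _) // mulr0 expR0.
have ek k : k != k0 -> e k <= c.
  move=> hk; rewrite /e /c ler_expR ler_nM2l ?oppr_lt0 //.
  apply: hgap => h; move/eqP: hk; apply; apply: val_inj.
  by rewrite /= h subnKC ?modnn // ltnW.
have ZE : Z = 1 + \sum_(k | k != k0) e k by rewrite /Z (bigD1 k0) //= ek0.
have Zge1 : 1 <= Z.
  by rewrite ZE lerDl sumr_ge0 // => k _; apply: ltW.
have Zle : Z <= 1 + (q%:R - 1) * c.
  rewrite ZE lerD2l.
  apply: (le_trans (ler_sum _ (fun k hk => ek k hk))).
  rewrite sumr_const cardC1 card_ord -mulr_natr mulrC.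
  rewrite mul1r -(subnK (ltnW hq)) /= natrD addrK.
  by rewrite addn1 /= mulr_natr.
have Zpos : 0 < Z by apply: lt_le_trans Zge1.
have colsum j : \sum_i e (Zq_sub i j) = Z.
  by rewrite /Z [RHS](reindex_inj (@Zq_sub_inj _ j)).
have [j _ jmax] := @Order.TotalTheory.arg_maxP _ R _ j0 predT (fun i => `|v 0 i|) isT.
have vj : 0 < `|v 0 j|.
  rewrite normr_gt0; apply/negP => /eqP vj0; move/eqP: vn0; apply.
  apply/rowP => i; rewrite mxE; apply/eqP; rewrite -normr_eq0 eq_le normr_ge0 andbT.
  by apply: (le_trans (jmax i isT)); rewrite vj0 normr0.
have hA i j' : transferQ0 beta Phi0 i j' = e (Zq_sub i j') / Z by rewrite mxE.
have ejj : e (Zq_sub j j) = 1 by rewrite /e hzero ?(@Zq_sub_diag _) // mulr0 expR0.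
have off : \sum_(i | i != j) e (Zq_sub i j) = Z - 1.
  by rewrite -(colsum j) [in RHS](bigD1 j) //= ejj addrC addrK.
move/rowP: hv => /(_ j); rewrite !mxE /=.
rewrite (bigD1 j) //= hA ejj => eq1.
have id1 : (lambda - 1 / Z) * v 0 j = \sum_(i | i != j) v 0 i * (e (Zq_sub i j) / Z).
  rewrite mulrBl -eq1 [v 0 j * _]mulrC addrC addrK.
  by apply: eq_bigr => i _; rewrite hA.
have key : `|lambda - 1 / Z| * `|v 0 j| <= `|v 0 j| * ((Z - 1) / Z).
  rewrite -normrM id1 -off mulr_suml mulr_sumr.
  apply: (le_trans (ler_norm_sum _ _ _)); apply: ler_sum => i _.
  rewrite normrM (ger0_norm (divr_ge0 (ltW (epos _)) (ltW Zpos))).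
  apply: ler_wpM2r; first by rewrite divr_ge0 // ltW.
  by have := jmax i isT.
have key2 : `|lambda - 1 / Z| <= (Z - 1) / Z.
  by rewrite -(ler_pM2r vj) [X in _ <= X]mulrC.
have lb : 1 / Z - (Z - 1) / Z <= lambda.
  move: key2; rewrite ler_norml => /andP [h _].
  move: h; set a := 1 / Z; set b := (Z - 1) / Z; lra.
apply: le_trans lb.
have q1 : 1 <= q%:R :> R by rewrite ler1n; exact: ltnW.
set s := (q%:R - 1) * c.
have s0 : 0 <= s by apply: mulr_ge0; [rewrite subr_ge0 | exact: ltW].
have -> : 1 / Z - (Z - 1) / Z = (2 - Z) / Z by field; rewrite lt0r_neq0.
have s1 : 0 < 1 + s by apply: lt_le_trans (ler_wpDr s0 (lexx 1)).
rewrite ler_pdivrMr // mulrAC ler_pdivlMr //.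
have : Z <= 1 + s := Zle.
clear -s0 Zge1; move=> hZ.
rewrite -subr_ge0; have -> : (2 - Z) * (1 + s) - (1 - s) * Z = 2 * (1 + s - Z) by ring.
by rewrite mulr_ge0 // subr_ge0.
Qed.
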